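(* Let $f=\frac1n\sum_{i=1}^n f_i$ be convex, and suppose each $f_i$ is $L_i$-smooth for some $L_i>0$. Let $L=\max_{1\le i\le n}L_i$, let $\mu\in(0,1/L]$, and let the integers $t(k)\ge1$ satisfy $\sum_{k=0}^\infty\beta^{t(k)}<\infty$. Let $\{\mathbf{x}_k\}$ be generated by NEAR-DGD$^+$ from an arbitrary initial point. Then $$f\Big(\frac1T\sum_{k=0}^{T-1}\bar x_k\Big)-f^*=O\Big(\frac1T\Big)\qquad\text{for } T\in\mathbb{N},$$ i.e. there is a constant $C>0$ independent of $T$ bounding $T$ times the left-hand side.
   Context: Let $n,p\in\mathbb{N}$. $W=(w_{ij})$ is an $n\times n$ doubly stochastic matrix whose associated directed graph is strongly connected and has a self-loop at every vertex ($w_{ii}>0$). $1_n\in\mathbb{R}^n$ is the all-ones vector, and $\beta\in[0,1)$ denotes the spectral norm of $W-\frac1n1_n1_n^\top$. Local costs $f_i:\mathbb{R}^p\to\mathbb{R}$ are differentiable, $f=\frac1n\sum_i f_i$, $f^*=\min f$, and the set of minimizers $X^*$ is assumed nonempty. A function $h$ is $L$-smooth if $\|\nabla h(x)-\nabla h(y)\|\le L\|x-y\|$ for all $x,y$. For $\mathbf{x}=(x_1^\top,\dots,x_n^\top)^\top\in\mathbb{R}^{np}$ put $\nabla F(\mathbf{x})=(\nabla f_1(x_1)^\top,\dots,\nabla f_n(x_n)^\top)^\top$. NEAR-DGD$^+$: $\mathbf{x}_{k+1}=(W^{t(k)}\otimes I_p)(\mathbf{x}_k-\mu\nabla F(\mathbf{x}_k))$,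 $k\ge0$ ($\otimes$ Kronecker product). With $\mathbf{x}_k=(x_{1,k}^\top,\dots,x_{n,k}^\top)^\top$, $\bar x_k=\frac1n\sum_i x_{i,k}$. $\|\cdot\|$ is the Euclidean norm. *)

(* Defs.v *)
From HB Require Import structures.
From mathcomp Require Import all_boot all_order all_algebra.
From mathcomp Require Import all_classical all_reals all_analysis.
Set Implicit Arguments. Unset Strict Implicit. Unset Printing Implicit Defensive.
Import Order.TTheory GRing.Theory Num.Theory.
Import numFieldNormedType.Exports.
Local Open Scope classical_set_scope.
Local Open Scope ring_scope.

Definition enorm {R : realType} {m k : nat} (A : 'M[R]_(m, k)) : R :=
  Num.sqrt (\sum_(i < m) \sum_(j < k) A i j ^+ 2).

Definition dotp {R : realType} {p : nat} (u v : 'rV[R]_p) : R :=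
  \sum_(j < p) u 0 j * v 0 j.

Definition specnorm {R : realType} {n : nat} (M : 'M[R]_n) : R :=
  sup [set enorm (M *m v) | v in [set v : 'cV[R]_n | enorm v <= 1]].

Definition doubly_stochastic {R : realType} {n : nat} (W : 'M[R]_n) : Prop :=
  (forall i j, 0 <= W i j) /\
  (forall i, \sum_(j < n) W i j = 1) /\
  (forall j, \sum_(i < n) W i j = 1).

Definition strongly_connected {R : realType} {n : nat} (W : 'M[R]_n) : Prop :=
  forall i j : 'I_n, connect (fun a b => 0 < W a b) i j.

Definition is_gradient {R : realType} {p : nat} (h : 'rV[R]_p -> R)
    (g : 'rV[R]_p -> 'rV[R]_p) : Prop :=
  forall x, differentiable h x /\ forall v, 'd h x v = dotp (g x) v.

Definition convex_fun {R : realType} {p : nat} (h : 'rV[R]_p -> R) : Prop :=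
  forall (a : R) (x y : 'rV[R]_p), 0 <= a <= 1 ->
    h (a *: x + (1 - a) *: y) <= a * h x + (1 - a) * h y.

Definition smooth_grad {R : realType} {p : nat} (g : 'rV[R]_p -> 'rV[R]_p) (L : R) : Prop :=
  forall x y, enorm (g x - g y) <= L * enorm (x - y).

(* NEAR-DGD+ : x_{k+1} = (W^{t(k)} (x) I_p)(x_k - mu grad F(x_k)), written blockwise. *)
Definition near_dgd_plus {R : realType} {n p : nat} (W : 'M[R]_n) (t : nat -> nat)
    (mu : R) (g : 'I_n -> 'rV[R]_p -> 'rV[R]_p) (x : nat -> 'I_n -> 'rV[R]_p) : Prop :=
  forall k i, x k.+1 i = \sum_(j < n) (W ^+ t k) i j *: (x k j - mu *: g j (x k j)).

(* Main.v *)
Require Import Defs.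
From HB Require Import structures.
From mathcomp Require Import all_boot all_order all_algebra.
From mathcomp Require Import all_classical all_reals all_analysis.
From mathcomp Require Import ring lra.
Import Order.TTheory GRing.Theory Num.Theory.
Import numFieldNormedType.Exports.
Local Open Scope classical_set_scope.
Local Open Scope ring_scope.
Set Implicit Arguments. Unset Strict Implicit. Unset Printing Implicit Defensive.

Section Norms.
Context {R : realType}.

Definition mdot {m k : nat} (A B : 'M[R]_(m, k)) : R :=
  \sum_(i < m) \sum_(j < k) A i j * B i j.

Lemma mdotC m k (A B : 'M[R]_(m,k)) : mdot A B = mdot B A.
Proof. by apply: eq_bigr => i _; apply: eq_bigr => j _; rewrite mulrC. Qed.

Lemma mdotDl m k (A B C : 'M[R]_(m,k)) : mdot (A + B) C = mdot A C + mdot B C.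
Proof.
rewrite /mdot -big_split; apply: eq_bigr => i _; rewrite -big_split.
by apply: eq_bigr => j _; rewrite !mxE mulrDl.
Qed.

Lemma mdotZl m k a (A C : 'M[R]_(m,k)) : mdot (a *: A) C = a * mdot A C.
Proof.
rewrite /mdot mulr_sumr; apply: eq_bigr => i _; rewrite mulr_sumr.
by apply: eq_bigr => j _; rewrite !mxE mulrA.
Qed.

Lemma mdotNl m k (A C : 'M[R]_(m,k)) : mdot (- A) C = - mdot A C.
Proof. by rewrite -scaleN1r mdotZl mulN1r. Qed.

Lemma mdotBl m k (A B C : 'M[R]_(m,k)) : mdot (A - B) C = mdot A C - mdot B C.
Proof. by rewrite mdotDl mdotNl. Qed.

Lemma mdotDr m k (A B C : 'M[R]_(m,k)) : mdot C (A + B) = mdot C A + mdot C B.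
Proof. by rewrite mdotC mdotDl !(mdotC C). Qed.
Lemma mdotZr m k a (A C : 'M[R]_(m,k)) : mdot C (a *: A) = a * mdot C A.
Proof. by rewrite mdotC mdotZl mdotC. Qed.
Lemma mdotBr m k (A B C : 'M[R]_(m,k)) : mdot C (A - B) = mdot C A - mdot C B.
Proof. by rewrite mdotC mdotBl !(mdotC C). Qed.
Lemma mdot0l m k (C : 'M[R]_(m,k)) : mdot 0 C = 0.
Proof. by rewrite -(scale0r 0) mdotZl mul0r. Qed.

Lemma mdot_ge0 m k (A : 'M[R]_(m,k)) : 0 <= mdot A A.
Proof. by apply: sumr_ge0 => i _; apply: sumr_ge0 => j _; rewrite -expr2 sqr_ge0. Qed.

Lemma enormE m k (A : 'M[R]_(m,k)) : enorm A = Num.sqrt (mdot A A).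
Proof.
rewrite /enorm /mdot; congr Num.sqrt;
by apply: eq_bigr => i _; apply: eq_bigr => j _; rewrite expr2.
Qed.

Lemma enorm_ge0 m k (A : 'M[R]_(m,k)) : 0 <= enorm A.
Proof. by rewrite enormE sqrtr_ge0. Qed.

Lemma enorm_sq m k (A : 'M[R]_(m,k)) : enorm A ^+ 2 = mdot A A.
Proof. by rewrite enormE sqr_sqrtr // mdot_ge0. Qed.

Lemma mdot_eq0 m k (A : 'M[R]_(m,k)) : mdot A A = 0 -> A = 0.
Proof.
move=> h; apply/matrixP => i j; rewrite mxE.
have h1 := (psumr_eq0P (fun i _ => sumr_ge0 _ (fun j _ => (sqr_ge0 (A i j)))) ).
have : \sum_(i < m) \sum_(j < k) A i j ^+ 2 = 0.
  by rewrite -[RHS]h; apply: eq_bigr => ? _; apply: eq_bigr => ? _; rewrite expr2.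
move/h1 => /(_ i isT).
move/(psumr_eq0P (fun j _ => sqr_ge0 (A i j))) => /(_ j isT).
by move/eqP; rewrite sqrf_eq0 => /eqP.
Qed.

Lemma enorm0 m k : enorm (0 : 'M[R]_(m,k)) = 0.
Proof. by rewrite enormE mdot0l sqrtr0. Qed.

Lemma enorm_eq0 m k (A : 'M[R]_(m,k)) : enorm A = 0 -> A = 0.
Proof. by move=> h; apply: mdot_eq0; rewrite -enorm_sq h expr0n. Qed.

Lemma mdot_CS m k (A B : 'M[R]_(m,k)) : mdot A B <= enorm A * enorm B.
Proof.
set a := enorm A; set b := enorm B.
have a0 : 0 <= a by apply: enorm_ge0.
have b0 : 0 <= b by apply: enorm_ge0.
have key : 0 <= mdot (b *: A - a *: B) (b *: A - a *: B) by apply: mdot_ge0.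
rewrite !(mdotBl, mdotBr, mdotZl, mdotZr) -!enorm_sq -/a -/b (mdotC B) in key.
have key2 : a * b * mdot A B <= a * b * (a * b) by nra.
have [ab0|abpos] := eqVneq (a * b) 0.
  move/eqP: ab0; rewrite mulf_eq0 => /orP [/eqP|/eqP] h.
    by rewrite (enorm_eq0 h) mdot0l; apply: mulr_ge0.
  by rewrite (enorm_eq0 h) mdotC mdot0l; apply: mulr_ge0.
have : 0 < a * b by rewrite lt_def abpos mulr_ge0.
move=> abp; by rewrite -(ler_pM2l abp).
Qed.

Lemma enormD m k (A B : 'M[R]_(m,k)) : enorm (A + B) <= enorm A + enorm B.
Proof.
rewrite -(@ler_pXn2r _ 2) ?nnegrE ?addr_ge0 ?enorm_ge0 //.
rewrite enorm_sq mdotDl !mdotDr -!enorm_sq (mdotC B) .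
have := mdot_CS A B; nra.
Qed.

Lemma enormZ m k a (A : 'M[R]_(m,k)) : enorm (a *: A) = `|a| * enorm A.
Proof.
by rewrite !enormE mdotZl mdotZr mulrA -expr2 sqrtrM ?sqr_ge0 // sqrtr_sqr.
Qed.

Lemma enormN m k (A : 'M[R]_(m,k)) : enorm (- A) = enorm A.
Proof. by rewrite -scaleN1r enormZ normrN1 mul1r. Qed.

Lemma enormB m k (A B : 'M[R]_(m,k)) : enorm (A - B) = enorm (B - A).
Proof. by rewrite -enormN opprB. Qed.

Lemma enorm_sum m k I (r : seq I) (P : pred I) (F : I -> 'M[R]_(m,k)) :
  enorm (\sum_(i <- r | P i) F i) <= \sum_(i <- r | P i) enorm (F i).
Proof.
elim/big_rec2: _ ; first by rewrite enorm0.
by move=> i y1 y2 _ h; apply: le_trans (enormD _ _) _; rewrite lerD2l.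
Qed.

Lemma dotp_mdot p (u v : 'rV[R]_p) : dotp u v = mdot u v.
Proof. by rewrite /mdot big_ord1. Qed.

End Norms.

Section A.
Context {R : realType} {p : nat}.
Lemma descent (h : 'rV[R]_p -> R) (gh : 'rV[R]_p -> 'rV[R]_p) (L : R) :
  (forall (x v : 'rV[R]_p) (s : R), is_derive s (1:R) (fun s => h (s *: v + x)) (dotp (gh (s *: v + x)) v)) ->
  (forall a b, enorm (gh a - gh b) <= L * enorm (a - b)) -> 0 <= L ->
  forall x v, h (v + x) <= h x + dotp (gh x) v + L / 2 * enorm v ^+ 2.
Proof.
move=> Hd HL L0 x v.
set D := dotp (gh x) v; set K := L / 2 * enorm v ^+ 2.
pose phi := (fun s => h (s *: v + x)).
pose psi := phi - ( *:%R D) - K \*: (@id R ^+ 2).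
have dpsi : forall c : R, is_derive c (1:R) psi (dotp (gh (c *: v + x)) v - D - K * (2 * c)).
  move=> c; have Hc := Hd x v c; rewrite /psi; apply: is_derive_eq.
  by rewrite expr1 /GRing.scale /= !mulr1.
have [c cin E] : exists2 c, c \in `]0, 1[ & psi 1 - psi 0 = (dotp (gh (c *: v + x)) v - D - K * (2 * c)) * (1 - 0).
  apply: MVT => //.
  apply: derivable_within_continuous => y yin; exact: (@ex_derive _ _ _ _ _ _ _ (dpsi y)).
move: cin; rewrite in_itv /= => /andP [c0 c1].
have psiE s : psi s = h (s *: v + x) - D * s - K * (s * s) by [].
move: E; rewrite !psiE subr0 mulr1 !(mul0r, mulr0, mul1r, mulr1, scale0r, scale1r, add0r, subr0).
have key : dotp (gh (c *: v + x)) v - D <= L * c * enorm v ^+ 2.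
  rewrite /D !dotp_mdot -mdotBl.
  apply: le_trans (mdot_CS _ _) _.
  have := HL (c *: v + x) x; rewrite addrK enormZ (ger0_norm (ltW c0)) => H1.
  rewrite expr2 mulrA; apply: ler_wpM2r; first exact: enorm_ge0.
  by rewrite mulrA in H1.
rewrite /K => E; lra.
Qed.
Lemma within_right (q : R -> R) (d : R) : q x @[x --> 0^'] --> d -> q x @[x --> 0^'+] --> d.
Proof.
move=> h; apply: cvg_trans h => A [e /= e0 He]; exists e => //= y /He H y0.
by apply: H; rewrite gt_eqF.
Qed.

Lemma conv_grad (F : 'rV[R]_p -> R) (gh : 'rV[R]_p -> 'rV[R]_p) :
  (forall (x v : 'rV[R]_p) (s : R), is_derive s (1:R) (fun s => F (s *: v + x)) (dotp (gh (s *: v + x)) v)) ->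
  convex_fun F ->
  forall x y, F x + dotp (gh x) (y - x) <= F y.
Proof.
move=> Hd Hc x y.
have [dv dval] := Hd x (y - x) 0.
rewrite scale0r add0r in dval.
have H1 := dv; rewrite /derivable in H1.
have H2 : (fun h : R => h^-1 *: (((fun s => F (s *: (y - x) + x)) \o shift 0) (h *: 1) - F (0 *: (y - x) + x))) @ 0^' --> dotp (gh x) (y - x).
  by rewrite -dval.
have H3 := within_right H2.
rewrite -lerBrDl; apply: (cvgr_to_le H3).
near=> h.
have h0 : 0 < h by near: h; apply: nbhs_right_gt.
have h1 : h < 1 by near: h; apply: nbhs_right_lt.
rewrite /= scale0r add0r /GRing.scale /= mulr1 addr0.
have -> : h *: (y - x) + x = h *: y + (1 - h) *: x.
  by rewrite scalerBr scalerBl scale1r addrA addrAC.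
have H : F (h *: y + (1 - h) *: x) <= h * F y + (1 - h) * F x.
  by apply: Hc; rewrite !ltW.
rewrite ler_pdivrMl //; lra.
Unshelve. all: by end_near.
Qed.
Lemma phi_derive (F : 'rV[R]_p -> R) (gf : 'rV[R]_p -> 'rV[R]_p) :
  is_gradient F gf ->
  forall (x v : 'rV[R]_p) (s : R), is_derive s (1:R) (fun s => F (s *: v + x)) (dotp (gf (s *: v + x)) v).
Proof.
move=> Hg x v s.
have [Hdf Hd] := Hg (s *: v + x).
have E : (fun h : R => h^-1 *: (((fun s => F (s *: v + x)) \o shift s) (h *: 1) - F (s *: v + x)))
   = (fun h : R => h^-1 *: ((F \o shift (s *: v + x)) (h *: v) - F (s *: v + x))).
  apply/funext => h /=; congr (_ *: (F _ - _)).
  by rewrite [_%:A]mulr1 scalerDl addrA.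
apply: DeriveDef.
  by rewrite /derivable E; apply: diff_derivable.
by rewrite /derive E -/(derive F (s *: v + x) v) deriveE.
Qed.
Lemma mdot_suml m k I (r : seq I) (P : pred I) (F : I -> 'M[R]_(m,k)) B :
  mdot (\sum_(i <- r | P i) F i) B = \sum_(i <- r | P i) mdot (F i) B.
Proof.
elim/big_rec2: _ ; first by rewrite mdot0l.
by move=> i y1 y2 _ <-; rewrite mdotDl.
Qed.

Lemma f_derive n (fi : 'I_n -> 'rV[R]_p -> R) (g : 'I_n -> 'rV[R]_p -> 'rV[R]_p) :
  (forall i, is_gradient (fi i) (g i)) ->
  forall (x v : 'rV[R]_p) (s : R),
    is_derive s (1:R) (fun s => n%:R^-1 * \sum_(i < n) fi i (s *: v + x))
      (dotp (n%:R^-1 *: \sum_(i < n) g i (s *: v + x)) v).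
Proof.
move=> Hg x v s.
have E : (fun s => n%:R^-1 * \sum_(i < n) fi i (s *: v + x)) =
   n%:R^-1 \*: (\sum_(i < n) (fun s : R => fi i (s *: v + x))).
  by apply/funext => y /=; rewrite fct_sumE.
rewrite E.
have H := is_deriveZ (n%:R^-1) (is_derive_sum (fun i => phi_derive (Hg i) x v s)).
apply: is_derive_eq H _.
rewrite dotp_mdot mdotZl /GRing.scale /=; congr (_ * _).
rewrite mdot_suml; apply: eq_bigr => i _; by rewrite dotp_mdot.
Qed.
End A.

Section Mat.
Context {R : realType}.

Lemma mdot_sq_le m k (A B : 'M[R]_(m,k)) : mdot A B ^+ 2 <= mdot A A * mdot B B.
Proof.
have h1 := mdot_CS A B.
have h2 := mdot_CS (- A) B.
rewrite mdotNl enormN in h2.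
rewrite -!enorm_sq -exprMn.
have a0 := enorm_ge0 A; have b0 := enorm_ge0 B.
nra.
Qed.

Lemma CS_sum k (a b : 'I_k -> R) :
  (\sum_(j < k) a j * b j) ^+ 2 <= (\sum_(j < k) a j * a j) * (\sum_(j < k) b j * b j).
Proof.
have := mdot_sq_le (\row_j a j) (\row_j b j).
rewrite /mdot !big_ord1.
have E : forall c d : 'I_k -> R, \sum_(j < k) (\row_j c j) 0 j * (\row_j d j) 0 j = \sum_(j < k) c j * d j.
  by move=> c d; apply: eq_bigr => j _; rewrite !mxE.
by rewrite !E.
Qed.

Lemma enorm_mulmx n (M : 'M[R]_n) (v : 'cV[R]_n) : enorm (M *m v) <= enorm M * enorm v.
Proof.
rewrite -(@ler_pXn2r _ 2) ?nnegrE ?mulr_ge0 ?enorm_ge0 //.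
rewrite exprMn !enorm_sq /mdot.
under eq_bigr do rewrite big_ord1 mxE -expr2.
rewrite mulr_suml; apply: ler_sum => i _.
apply: le_trans (CS_sum _ _) _.
suff -> : \sum_(i0 < n) \sum_(j < 1) v i0 j * v i0 j = \sum_(j < n) v j ord0 * v j ord0 by [].
by apply: eq_bigr => j _; rewrite big_ord1.
Qed.

Lemma specnorm_ub n (M : 'M[R]_n) :
  ubound [set enorm (M *m v) | v in [set v : 'cV[R]_n | enorm v <= 1]] (specnorm M).
Proof.
apply: ub_le_sup; exists (enorm M) => y [w /= wS <-].
apply: le_trans (enorm_mulmx M w) _.
by rewrite -{2}(mulr1 (enorm M)) ler_wpM2l ?enorm_ge0.
Qed.

Lemma specnorm_ge0 n (M : 'M[R]_n) : 0 <= specnorm M.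
Proof.
have H := @specnorm_ub n M (enorm (M *m (0 : 'cV[R]_n))).
rewrite mulmx0 enorm0 in H; apply: H.
by exists 0 => //=; rewrite ?mulmx0 enorm0.
Qed.

Lemma specnorm_bound n (M : 'M[R]_n) (v : 'cV[R]_n) :
  enorm (M *m v) <= specnorm M * enorm v.
Proof.
have [h|h] := eqVneq (enorm v) 0.
  by move: (enorm_eq0 h) => ->; rewrite mulmx0 !enorm0 mulr0.
have vp : 0 < enorm v by rewrite lt_def h enorm_ge0.
set u := (enorm v)^-1 *: v.
have uE : enorm u = 1 by rewrite /u enormZ ger0_norm ?invr_ge0 ?enorm_ge0 // mulVf.
have H : enorm (M *m u) <= specnorm M.
  by apply: specnorm_ub; exists u => //=; rewrite uE.
rewrite /u -scalemxAr enormZ ger0_norm ?invr_ge0 ?enorm_ge0 // in H.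
by rewrite -ler_pdivrMr // mulrC.
Qed.
Lemma block_bound n p (M : 'M[R]_n) (b : R) :
  (forall v : 'cV[R]_n, enorm (M *m v) <= b * enorm v) -> 0 <= b ->
  forall Z : 'I_n -> 'rV[R]_p,
  \sum_(i < n) mdot (\sum_(j < n) M i j *: Z j) (\sum_(j < n) M i j *: Z j)
    <= b ^+ 2 * \sum_(j < n) mdot (Z j) (Z j).
Proof.
move=> Hb b0 Z.
have Hc : forall c : 'I_p, \sum_(i < n) (\sum_(j < n) M i j * Z j 0 c) * (\sum_(j < n) M i j * Z j 0 c)
    <= b ^+ 2 * \sum_(j < n) Z j 0 c * Z j 0 c.
  move=> c; have := Hb (\col_j Z j 0 c).
  set w := M *m _ => Hw.
  have E1 : \sum_(i < n) (\sum_(j < n) M i j * Z j 0 c) * (\sum_(j < n) M i j * Z j 0 c) = enorm w ^+ 2.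
    rewrite enorm_sq /mdot; apply: eq_bigr => i _; rewrite big_ord1 /w !mxE.
    by congr (_ * _); apply: eq_bigr => j _; rewrite mxE.
  have E2 : \sum_(j < n) Z j 0 c * Z j 0 c = enorm (\col_j Z j 0 c) ^+ 2.
    by rewrite enorm_sq /mdot; apply: eq_bigr => j _; rewrite big_ord1 !mxE.
  rewrite E1 E2 -exprMn; rewrite expr2 [X in _ <= X]expr2.
  by apply: ler_pM => //; apply: enorm_ge0.
rewrite /mdot.
have E3 : forall i, \sum_(j0 < 1) \sum_(j1 < p) (\sum_(j < n) M i j *: Z j) j0 j1 * (\sum_(j < n) M i j *: Z j) j0 j1
   = \sum_(c < p) (\sum_(j < n) M i j * Z j 0 c) * (\sum_(j < n) M i j * Z j 0 c).
  move=> i; rewrite big_ord1; apply: eq_bigr => c _; rewrite !summxE.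
  by congr (_ * _); apply: eq_bigr => j _; rewrite mxE.
under eq_bigr do rewrite E3.
rewrite exchange_big /=.
apply: le_trans (ler_sum _ (fun c _ => Hc c)) _.
rewrite -mulr_sumr exchange_big /= le_eqVlt; apply/orP; left; apply/eqP; congr (_ * _).
by apply: eq_bigr => j _; rewrite big_ord1.
Qed.
Lemma aux_nat (k : nat) : (0 < k)%N -> (k%:R^-1 / k%:R) *+ k = k%:R^-1 :> R.
Proof.
move=> k0; have kn : k%:R != 0 :> R by rewrite pnatr_eq0 -lt0n.
by rewrite -mulr_natl; field.
Qed.

Lemma aux_nat2 (k : nat) (a : R) : (0 < k)%N -> k%:R * (k%:R^-1 * a) = a.
Proof.
move=> k0; have kn : k%:R != 0 :> R by rewrite pnatr_eq0 -lt0n.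
by field.
Qed.

Section J.
Variables (n : nat) (W : 'M[R]_n).
Hypothesis n0 : (0 < n)%N.
Hypothesis HW : doubly_stochastic W.
Let J : 'M[R]_n := n%:R^-1 *: const_mx 1.

Lemma JE i j : J i j = n%:R^-1.
Proof. by rewrite /J !mxE mulr1. Qed.

Lemma WJ : W * J = J.
Proof.
case: HW => _ [Hr _]; apply/matrixP => i j; rewrite -mulmxE mxE.
under eq_bigr do rewrite JE.
by rewrite -mulr_suml Hr mul1r JE.
Qed.

Lemma JW : J * W = J.
Proof.
case: HW => _ [_ Hc]; apply/matrixP => i j; rewrite -mulmxE mxE.
under eq_bigr do rewrite JE.
by rewrite -mulr_sumr Hc mulr1 JE.
Qed.

Lemma JJ : J * J = J.
Proof.
apply/matrixP => i j; rewrite -mulmxE mxE.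
under eq_bigr do rewrite !JE.
by rewrite sumr_const card_ord JE aux_nat.
Qed.

Lemma JWt t : J * W ^+ t = J.
Proof.
elim: t => [|t IH]; first by rewrite expr0 mulr1.
by rewrite exprSr mulrA IH JW.
Qed.

Lemma WtJ t : W ^+ t * J = J.
Proof.
elim: t => [|t IH]; first by rewrite expr0 mul1r.
by rewrite exprS -mulrA IH WJ.
Qed.

Lemma WJpow t : (W - J) ^+ t.+1 = W ^+ t.+1 - J.
Proof.
elim: t => [|t IH]; first by rewrite !expr1.
rewrite exprSr IH mulrBl !mulrBr -exprSr WtJ JW JJ.
by rewrite subrr subr0.
Qed.

Lemma colsum_Wt t j : \sum_(i < n) (W ^+ t) i j = 1.
Proof.
have := congr1 (fun M : 'M[R]_n => M (Ordinal n0) j) (JWt t).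
rewrite -mulmxE mxE JE.
under eq_bigr do rewrite JE.
rewrite -mulr_sumr => /(congr1 (fun x => n%:R * x)).
rewrite aux_nat2 // mulfV // pnatr_eq0 -lt0n //.
Qed.

End J.
End Mat.

Section Main.
Variables (R : realType) (n p : nat) (W : 'M[R]_n)
  (fi : 'I_n -> 'rV[R]_p -> R) (g : 'I_n -> 'rV[R]_p -> 'rV[R]_p)
  (Li : 'I_n -> R) (mu : R) (t : nat -> nat) (x : nat -> 'I_n -> 'rV[R]_p) (xs : 'rV[R]_p).
Hypothesis n0 : (0 < n)%N.
Hypothesis HW : doubly_stochastic W.
Hypothesis Hg : forall i, is_gradient (fi i) (g i).
Hypothesis Hconv : convex_fun (fun z => n%:R^-1 * \sum_(i < n) fi i z).
Hypothesis Hmin : forall y, n%:R^-1 * \sum_(i < n) fi i xs <= n%:R^-1 * \sum_(i < n) fi i y.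
Hypothesis HLi : forall i, 0 < Li i.
Hypothesis Hsm : forall i, smooth_grad (g i) (Li i).
Hypothesis mu0 : 0 < mu.
Hypothesis muL : mu <= (\big[Num.max/0]_(i < n) Li i)^-1.
Hypothesis Ht : forall k, (1 <= t k)%N.
Hypothesis Hser : cvgn (series (fun k => specnorm (W - n%:R^-1 *: const_mx 1) ^+ t k)).
Hypothesis Hdgd : near_dgd_plus W t mu g x.

Definition f z := n%:R^-1 * \sum_(i < n) fi i z.
Definition G z := n%:R^-1 *: \sum_(i < n) g i z.
Definition L := \big[Num.max/0]_(i < n) Li i.

Lemma nR0 : (n%:R : R) != 0.
Proof. by rewrite pnatr_eq0 -lt0n. Qed.
Lemma nRgt0 : (0 : R) < n%:R.
Proof. by rewrite ltr0n. Qed.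

Lemma Li_le i : Li i <= L.
Proof. exact: le_bigmax. Qed.

Lemma L_gt0 : 0 < L.
Proof. exact: lt_le_trans (HLi (Ordinal n0)) (Li_le _). Qed.

Lemma muL1 : mu * L <= 1.
Proof. by rewrite -ler_pdivlMr ?L_gt0 // mul1r. Qed.

Lemma g_lip i a b : enorm (g i a - g i b) <= L * enorm (a - b).
Proof.
apply: le_trans (Hsm i a b) _; apply: ler_wpM2r; [exact: enorm_ge0 | exact: Li_le].
Qed.

Lemma G_lip a b : enorm (G a - G b) <= L * enorm (a - b).
Proof.
rewrite /G -scalerBr -sumrB enormZ ger0_norm ?invr_ge0 ?ler0n //.
rewrite ler_pdivrMl ?nRgt0 //.
apply: le_trans (enorm_sum _ _ _) _.
apply: le_trans (ler_sum _ (fun i _ => g_lip i a b)) _.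
by rewrite sumr_const card_ord mulr_natl.
Qed.

Lemma f_deriv (z v : 'rV[R]_p) (s : R) :
  is_derive s (1:R) (fun s => f (s *: v + z)) (dotp (G (s *: v + z)) v).
Proof. exact: f_derive. Qed.

Lemma f_descent z v : f (v + z) <= f z + dotp (G z) v + L / 2 * enorm v ^+ 2.
Proof. apply: descent => //; [exact: f_deriv | exact: G_lip | exact: ltW L_gt0]. Qed.

Lemma f_conv a b : f a + dotp (G a) (b - a) <= f b.
Proof. apply: conv_grad => //; exact: f_deriv. Qed.

Lemma G_xs : G xs = 0.
Proof.
have h := f_descent xs (- mu *: G xs).
have hm := Hmin ((- mu *: G xs) + xs).
rewrite -/(f _) -/(f _) in hm.
rewrite dotp_mdot mdotZr enormZ exprMn -enorm_sq normrN (ger0_norm (ltW mu0)) in h.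
set N := enorm (G xs) ^+ 2 in h.
have N0 : 0 <= N by rewrite /N exprn_ge0 ?enorm_ge0.
have l1 := muL1.
have Lp := L_gt0.
have h3 : mu * N * (mu * L) <= mu * N by apply: ler_piMr => //; apply: mulr_ge0 => //; exact: ltW.
have : mu * N <= 0 by nra.
rewrite pmulr_rle0 // => HN.
apply: enorm_eq0; apply/eqP; rewrite -sqrf_eq0 -/N.
by rewrite eq_le HN N0.
Qed.

Definition J : 'M[R]_n := n%:R^-1 *: const_mx 1.
Definition beta := specnorm (W - J).
Definition b k := beta ^+ t k.
Definition y k := n%:R^-1 *: \sum_(i < n) x k i.
Definition Z k j := x k j - mu *: g j (x k j).
Definition Gb k := n%:R^-1 *: \sum_(j < n) g j (x k j).
Definition e k := Gb k - G (y k).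
Definition r k := enorm (y k - xs).
Definition Dsq k := \sum_(i < n) mdot (x k i - y k) (x k i - y k).
Definition D k := Num.sqrt (Dsq k).
Definition c0 := enorm xs + mu * \sum_(j < n) enorm (g j xs).

Lemma beta_ge0 : 0 <= beta.
Proof. exact: specnorm_ge0. Qed.
Lemma b_ge0 k : 0 <= b k.
Proof. by rewrite /b exprn_ge0 // beta_ge0. Qed.

Lemma y_next0 k : y k.+1 = n%:R^-1 *: \sum_(j < n) Z k j.
Proof.
rewrite /y; congr (_ *: _).
under eq_bigr do rewrite Hdgd.
rewrite exchange_big /=; apply: eq_bigr => j _.
by rewrite -scaler_suml colsum_Wt // scale1r.
Qed.

Lemma y_next k : y k.+1 = y k - mu *: Gb k.
Proof.
rewrite y_next0 /Z sumrB -scaler_sumr scalerBr /y /Gb !scalerA mulrC.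
by [].
Qed.

Lemma cons_next k i : x k.+1 i - y k.+1 = \sum_(j < n) ((W - J) ^+ t k) i j *: Z k j.
Proof.
rewrite Hdgd y_next0 -/(Z k _).
have [t' ->] : exists t', t k = t'.+1 by exists (t k).-1; rewrite prednK // Ht.
rewrite /J WJpow //.
have E j : (W ^+ t'.+1 - n%:R^-1 *: const_mx 1) i j = (W ^+ t'.+1) i j - n%:R^-1.
  by rewrite !mxE mulr1.
under [X in _ = X]eq_bigr do rewrite E scalerBl.
by rewrite [RHS]sumrB -[in RHS]scaler_sumr.
Qed.

Lemma pow_bound (s : nat) (v : 'cV[R]_n) : enorm (((W - J) ^+ s) *m v) <= beta ^+ s * enorm v.
Proof.
elim: s v => [|s IH] v; first by rewrite expr0 mul1mx mul1r.
rewrite exprS -mulmxE -mulmxA.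
apply: le_trans (specnorm_bound _ _) _; rewrite -/beta exprS -mulrA.
by apply: ler_wpM2l; [exact: beta_ge0 | exact: IH].
Qed.

Lemma Dsq_ge0 k : 0 <= Dsq k.
Proof. by apply: sumr_ge0 => i _; apply: mdot_ge0. Qed.
Lemma D_ge0 k : 0 <= D k.
Proof. exact: sqrtr_ge0. Qed.
Lemma r_ge0 k : 0 <= r k.
Proof. exact: enorm_ge0. Qed.

Lemma D_next k : D k.+1 <= b k * Num.sqrt (\sum_(j < n) mdot (Z k j) (Z k j)).
Proof.
have H := block_bound (pow_bound (t k)) (exprn_ge0 _ beta_ge0) (Z k).
rewrite /D /Dsq.
under eq_bigr do rewrite cons_next.
apply: le_trans (ler_wsqrtr H) _.
rewrite sqrtrM ?exprn_ge0 ?beta_ge0 // sqrtr_sqr ger0_norm //; exact: b_ge0.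
Qed.

Lemma xi_le_D k i : enorm (x k i - y k) <= D k.
Proof.
rewrite enormE /D; apply: ler_wsqrtr; rewrite /Dsq (bigD1 i) //= lerDl.
by apply: sumr_ge0 => j _; apply: mdot_ge0.
Qed.

Lemma c0_ge0 : 0 <= c0.
Proof.
rewrite /c0 addr_ge0 ?enorm_ge0 //; apply: mulr_ge0; first exact: ltW.
by apply: sumr_ge0 => j _; apply: enorm_ge0.
Qed.

Lemma Z_le k j : enorm (Z k j) <= 2 * D k + 2 * r k + c0.
Proof.
have E : Z k j = (x k j - xs) - mu *: (g j (x k j) - g j xs) + (xs - mu *: g j xs).
  by apply/matrixP => a c; rewrite /Z !mxE; ring.
have h1 : enorm (x k j - xs) <= D k + r k.
  have -> : x k j - xs = (x k j - y k) + (y k - xs) by rewrite addrA subrK.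
  by apply: le_trans (enormD _ _) _; apply: lerD; [exact: xi_le_D | by []].
have h2 : enorm (mu *: (g j (x k j) - g j xs)) <= enorm (x k j - xs).
  rewrite enormZ (ger0_norm (ltW mu0)).
  apply: le_trans (ler_wpM2l (ltW mu0) (g_lip _ _ _)) _.
  by rewrite mulrA ler_piMl ?enorm_ge0 ?muL1.
have h3 : enorm (xs - mu *: g j xs) <= c0.
  apply: le_trans (enormD _ _) _; rewrite enormN /c0 lerD2l enormZ (ger0_norm (ltW mu0)).
  apply: ler_wpM2l; first exact: ltW.
  by rewrite (bigD1 j) //= lerDl; apply: sumr_ge0 => ? _; apply: enorm_ge0.
rewrite E; apply: le_trans (enormD _ _) _.
apply: le_trans (lerD (enormD _ _) h3) _.
rewrite enormN.
have := D_ge0 k; have := r_ge0 k; lra.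
Qed.

Lemma sqrtZ_le k : Num.sqrt (\sum_(j < n) mdot (Z k j) (Z k j)) <= n%:R * (2 * D k + 2 * r k + c0).
Proof.
set B := 2 * D k + 2 * r k + c0.
have B0 : 0 <= B by rewrite /B; have := D_ge0 k; have := r_ge0 k; have := c0_ge0; lra.
rewrite -(@ler_pXn2r _ 2) ?nnegrE ?sqrtr_ge0 ?mulr_ge0 ?ler0n // sqr_sqrtr; last first.
  by apply: sumr_ge0 => j _; apply: mdot_ge0.
have H : \sum_(j < n) mdot (Z k j) (Z k j) <= n%:R * B ^+ 2.
  have Hj j : mdot (Z k j) (Z k j) <= B ^+ 2.
    by rewrite -enorm_sq ler_pXn2r ?nnegrE ?enorm_ge0 // Z_le.
  apply: le_trans (ler_sum _ (fun j _ => Hj j)) _.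
  by rewrite sumr_const card_ord mulr_natl.
apply: le_trans H _; rewrite exprMn ler_wpM2r ?exprn_ge0 //.
have n1 : (1 : R) <= n%:R by rewrite ler1n.
by rewrite expr2 ler_peMr // ler0n.
Qed.

Lemma D_next2 k : D k.+1 <= b k * (n%:R * (2 * D k + 2 * r k + c0)).
Proof.
apply: le_trans (D_next k) _; apply: ler_wpM2l; [exact: b_ge0 | exact: sqrtZ_le].
Qed.

Lemma e_le k : enorm (e k) <= L * D k.
Proof.
rewrite /e /Gb /G /y -scalerBr -sumrB enormZ ger0_norm ?invr_ge0 ?ler0n //.
rewrite ler_pdivrMl ?nRgt0 //.
apply: le_trans (enorm_sum _ _ _) _.
have H j : enorm (g j (x k j) - g j (n%:R^-1 *: \sum_(i < n) x k i)) <= L * D k.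
  by apply: le_trans (g_lip _ _ _) _; apply: ler_wpM2l; [exact: ltW L_gt0 | exact: xi_le_D].
apply: le_trans (ler_sum _ (fun j _ => H j)) _.
by rewrite sumr_const card_ord mulr_natl.
Qed.

Lemma Gy_le k : enorm (G (y k)) <= L * r k.
Proof. by have := G_lip (y k) xs; rewrite G_xs subr0. Qed.

Lemma mdot_sub_sq (u v : 'rV[R]_p) c :
  mdot (u - c *: v) (u - c *: v) = mdot u u - 2 * c * mdot v u + c ^+ 2 * mdot v v.
Proof. rewrite mdotBl !mdotBr !mdotZl !mdotZr (mdotC u v); ring. Qed.
Lemma mdot_add_sq (u v : 'rV[R]_p) :
  mdot (u + v) (u + v) = mdot u u + 2 * mdot u v + mdot v v.
Proof. rewrite mdotDl !mdotDr (mdotC v u); ring. Qed.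

Lemma hd_eq k : Gb k = G (y k) + e k.
Proof. by rewrite /e addrC subrK. Qed.
Lemma hy_eq k : y k.+1 = - mu *: Gb k + y k.
Proof. by rewrite y_next addrC scaleNr. Qed.
Lemma hy2_eq k : y k.+1 - xs = (y k - xs) - mu *: Gb k.
Proof. by rewrite y_next addrAC. Qed.

Opaque y Gb e G.
Lemma step k : f (y k.+1) - f xs <=
  (r k ^+ 2 - r k.+1 ^+ 2) / (2 * mu) + 2 * r k * enorm (e k) + mu * enorm (e k) ^+ 2.
Proof.
set w := y k - xs.
have hd := hd_eq k.
have hy := hy_eq k.
have hy2 := hy2_eq k; rewrite -/w in hy2.
set gg := mdot (G (y k)) (G (y k)).
set ge := mdot (G (y k)) (e k).
set ee := mdot (e k) (e k).
set a := mdot (G (y k)) w.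
set q := mdot (e k) w.
set X := gg + 2 * ge + ee.
have hX : mdot (Gb k) (Gb k) = X.
  rewrite hd mdotDl [mdot (G (y k)) (_ + _)]mdotDr [mdot (e k) (_ + _)]mdotDr (mdotC (e k) (G (y k))) /X /gg /ge /ee; ring.
have hX0 : 0 <= X by rewrite -hX mdot_ge0.
have hA : f (y k.+1) <= f (y k) - mu * (gg + ge) + L / 2 * mu ^+ 2 * X.
  have h1 := f_descent (y k) (- mu *: Gb k).
  rewrite -hy dotp_mdot mdotZr enormZ exprMn normrN (ger0_norm (ltW mu0)) enorm_sq hX in h1.
  rewrite hd mdotDr -/gg -/ge in h1.
  by move: h1; rewrite mulNr; lra.
have hL : L / 2 * mu ^+ 2 * X <= mu / 2 * X.
  have := muL1; have := L_gt0; move=> l0 l1.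
  have -> : L / 2 * mu ^+ 2 * X = (mu / 2 * X) * (mu * L) by ring.
  apply: ler_piMr => //; apply: mulr_ge0 => //; apply: mulr_ge0; [exact: ltW | by []].
have hB : f (y k) - a <= f xs.
  have h2 := f_conv (y k) xs.
  rewrite dotp_mdot -opprB -scaleN1r mdotZr -/w -/a in h2.
  lra.
have hC : r k.+1 ^+ 2 = r k ^+ 2 - 2 * mu * (a + q) + mu ^+ 2 * X.
  rewrite /r !enorm_sq hy2 -/w (mdot_sub_sq w (Gb k) mu) hX hd (mdotDl (G (y k)) (e k) w) -/a -/q; ring.
have hq : - q <= r k * enorm (e k).
  have := mdot_CS (- e k) w; rewrite mdotNl enormN mulrC.
  by rewrite /r -/w.
have hge : mu * ge <= r k * enorm (e k).
  have h1 : ge <= L * r k * enorm (e k).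
    apply: le_trans (mdot_CS _ _) _; apply: ler_wpM2r; [exact: enorm_ge0 | exact: Gy_le].
  have l1 := muL1; have l0 := L_gt0; have e0 := enorm_ge0 (e k); have r0 := r_ge0 k.
  apply: le_trans (ler_wpM2l (ltW mu0) h1) _.
  have -> : mu * (L * r k * enorm (e k)) = (r k * enorm (e k)) * (mu * L) by ring.
  by apply: ler_piMr => //; apply: mulr_ge0.
have hee : ee = enorm (e k) ^+ 2 by rewrite enorm_sq.
have hC' : (r k ^+ 2 - r k.+1 ^+ 2) / (2 * mu) = a + q - mu / 2 * X.
  rewrite hC; have mu0' : mu != 0 by rewrite gt_eqF.
  by field.
rewrite hC' -hee.
move: hA hL hB hq hge; rewrite /X; lra.
Qed.
Lemma fy_ge k : f xs <= f (y k).
Proof. exact: Hmin. Qed.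

Lemma E_ge0 k : 0 <= enorm (e k).
Proof. exact: enorm_ge0. Qed.

Lemma r_next k : r k.+1 <= r k + 2 * mu * enorm (e k).
Proof.
have h := step k; have h0 := fy_ge k.+1.
have r0 := r_ge0 k; have r1 := r_ge0 k.+1; have e0 := E_ge0 k.
set E := enorm (e k) in h e0 *.
have : r k.+1 ^+ 2 <= (r k + 2 * mu * E) ^+ 2.
  have hm : 0 < 2 * mu by rewrite mulr_gt0.
  have : 0 <= (r k ^+ 2 - r k.+1 ^+ 2) / (2 * mu) + 2 * r k * E + mu * E ^+ 2 by lra.
  move=> h1.
  have h2 : 0 <= (r k ^+ 2 - r k.+1 ^+ 2) + 2 * mu * (2 * r k * E + mu * E ^+ 2).
    have := mulr_ge0 (ltW hm) h1.
    have mu0' : mu != 0 by rewrite gt_eqF.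
    have -> : 2 * mu * ((r k ^+ 2 - r k.+1 ^+ 2) / (2 * mu) + 2 * r k * E + mu * E ^+ 2)
       = (r k ^+ 2 - r k.+1 ^+ 2) + 2 * mu * (2 * r k * E + mu * E ^+ 2) by field.
    by [].
  have h3 : 0 <= mu * mu * E * E by rewrite !mulr_ge0 // ltW.
  nra.
rewrite ler_pXn2r ?nnegrE //.
by rewrite addr_ge0 // !mulr_ge0 // ltW.
Qed.

Definition Phi k := r k + 2 * D k + c0.

Lemma Phi_ge0 k : 0 <= Phi k.
Proof. have := r_ge0 k; have := D_ge0 k; have := c0_ge0; rewrite /Phi; lra. Qed.

Lemma Phi_next k : Phi k.+1 <= (1 + 4 * n%:R * b k) * Phi k.
Proof.
have h1 := r_next k; have h2 := D_next2 k; have h3 := e_le k.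
have l1 := muL1; have l0 := L_gt0.
have d0 := D_ge0 k; have rr := r_ge0 k; have cc := c0_ge0; have bb := b_ge0 k.
have nn : (0 : R) <= n%:R by rewrite ler0n.
have h4 : 2 * mu * enorm (e k) <= 2 * D k.
  have : mu * enorm (e k) <= mu * (L * D k) by rewrite ler_wpM2l // ltW.
  have : mu * (L * D k) <= D k.
    have -> : mu * (L * D k) = D k * (mu * L) by ring.
    by rewrite ler_piMr.
  lra.
have h5 : b k * (n%:R * (2 * D k + 2 * r k + c0)) <= 2 * n%:R * b k * Phi k.
  have -> : 2 * n%:R * b k * Phi k = b k * (n%:R * (2 * Phi k)) by ring.
  apply: ler_wpM2l => //; apply: ler_wpM2l => //; rewrite /Phi; lra.
rewrite /Phi in h5 *; lra.
Qed.

Lemma Phi_bound k : Phi k <= Phi 0 * expR (4 * n%:R * \sum_(j < k) b j).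
Proof.
elim: k => [|k IH]; first by rewrite big_ord0 mulr0 expR0 mulr1.
apply: le_trans (Phi_next k) _.
rewrite big_ord_recr /= (mulrDr (4 * n%:R)) expRD mulrA [X in _ <= X]mulrC.
apply: ler_pM.
- by rewrite addr_ge0 // mulr_ge0 ?b_ge0 // mulr_ge0 // ler0n.
- exact: Phi_ge0.
- exact: expR_ge1Dx.
- exact: IH.
Qed.

Definition bS := limn (series b).

Lemma bsum_le k : \sum_(j < k) b j <= bS.
Proof.
have Hs : cvgn (series b) := Hser.
have Hnd : nondecreasing_seq (series b).
  apply: (@nondecreasing_series _ b xpredT 0) => j _ _; exact: b_ge0.
have := nondecreasing_cvgn_le Hnd Hs k.
by rewrite /series /= big_mkord.
Qed.

Lemma bS_ge0 : 0 <= bS.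
Proof. by have := bsum_le 0; rewrite big_ord0. Qed.

Definition P := Phi 0 * expR (4 * n%:R * bS).

Lemma Phi_le_P k : Phi k <= P.
Proof.
apply: le_trans (Phi_bound k) _; apply: ler_wpM2l; first exact: Phi_ge0.
by rewrite ler_expR ler_wpM2l ?bsum_le // mulr_ge0 // ler0n.
Qed.

Lemma P_ge0 : 0 <= P.
Proof. exact: le_trans (Phi_ge0 0) (Phi_le_P 0). Qed.

Lemma r_le_P k : r k <= P.
Proof.
have := Phi_le_P k; have := D_ge0 k; have := c0_ge0; rewrite /Phi; lra.
Qed.

Lemma D_le_P k : D k <= P.
Proof.
have := Phi_le_P k; have := D_ge0 k; have := c0_ge0; have := r_ge0 k; rewrite /Phi; lra.
Qed.

Lemma Dnext_P k : D k.+1 <= 2 * n%:R * P * b k.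
Proof.
apply: le_trans (D_next2 k) _.
have -> : 2 * n%:R * P * b k = b k * (n%:R * (2 * P)) by ring.
apply: ler_wpM2l; first exact: b_ge0.
apply: ler_wpM2l; first by rewrite ler0n.
have := Phi_le_P k; have := D_ge0 k; have := c0_ge0; rewrite /Phi; lra.
Qed.

Lemma nP_ge0 : 0 <= 2 * n%:R * P.
Proof. by apply: mulr_ge0; [apply: mulr_ge0; [|apply: ler0n]|exact: P_ge0]. Qed.

Lemma Dsum T : \sum_(k < T) D k <= D 0 + 2 * n%:R * P * bS.
Proof.
have h0 : 0 <= 2 * n%:R * P * bS by apply: mulr_ge0; [exact: nP_ge0|exact: bS_ge0].
case: T => [|T]; first by rewrite big_ord0; apply: addr_ge0 => //; exact: D_ge0.
rewrite big_ord_recl lerD2l.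
under eq_bigr do rewrite lift0.
apply: le_trans (ler_sum _ (fun (k : 'I_T) _ => Dnext_P k)) _.
rewrite -mulr_sumr; apply: ler_wpM2l; [exact: nP_ge0 | exact: bsum_le].
Qed.

Lemma Esum T : \sum_(k < T) enorm (e k) <= L * (D 0 + 2 * n%:R * P * bS).
Proof.
apply: le_trans (ler_sum _ (fun (k : 'I_T) _ => e_le k)) _.
rewrite -mulr_sumr; apply: ler_wpM2l; [exact: ltW L_gt0 | exact: Dsum].
Qed.

Lemma tele T : \sum_(k < T) (f (y k.+1) - f xs) + r T ^+ 2 / (2 * mu) <=
  r 0 ^+ 2 / (2 * mu) + \sum_(k < T) (2 * r k * enorm (e k) + mu * enorm (e k) ^+ 2).
Proof.
elim: T => [|T IH]; first by rewrite !big_ord0 add0r addr0.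
rewrite !big_ord_recr /=.
have h := step T.
have E : (r T ^+ 2 - r T.+1 ^+ 2) / (2 * mu) = r T ^+ 2 / (2 * mu) - r T.+1 ^+ 2 / (2 * mu).
  by rewrite mulrBl.
rewrite E in h; lra.
Qed.

Definition C0 := (f (y 0) - f xs) + r 0 ^+ 2 / (2 * mu) + 3 * P * (L * (D 0 + 2 * n%:R * P * bS)).

Lemma Fsum T : \sum_(k < T) (f (y k) - f xs) <= C0.
Proof.
have hterm k : 2 * r k * enorm (e k) + mu * enorm (e k) ^+ 2 <= 3 * P * enorm (e k).
  have e0 := E_ge0 k; have hr := r_le_P k; have hD := D_le_P k.
  have he := e_le k; have l1 := muL1; have l0 := L_gt0; have p0 := P_ge0.
  have h1 : mu * enorm (e k) <= P.
    have : mu * enorm (e k) <= mu * (L * P).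
      apply: ler_wpM2l; first exact: ltW.
      apply: le_trans he _; apply: ler_wpM2l => //; exact: ltW.
    have : mu * (L * P) <= P by rewrite mulrA ler_piMl.
    lra.
  have h2 : mu * enorm (e k) ^+ 2 <= P * enorm (e k).
    by rewrite expr2 mulrA ler_wpM2r.
  have h3 : 2 * r k * enorm (e k) <= 2 * P * enorm (e k).
    by rewrite ler_wpM2r // ler_wpM2l.
  lra.
have hs : \sum_(k < T) (2 * r k * enorm (e k) + mu * enorm (e k) ^+ 2)
   <= 3 * P * (L * (D 0 + 2 * n%:R * P * bS)).
  apply: le_trans (ler_sum _ (fun (k : 'I_T) _ => hterm k)) _.
  rewrite -mulr_sumr; apply: ler_wpM2l; last exact: Esum.
  by apply: mulr_ge0; [|exact: P_ge0].
have ht := tele T.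
have rT : 0 <= r T ^+ 2 / (2 * mu) by rewrite divr_ge0 ?exprn_ge0 ?r_ge0 // mulr_ge0 // ltW.
have H1 : \sum_(k < T) (f (y k) - f xs) <= \sum_(k < T.+1) (f (y k) - f xs).
  by rewrite big_ord_recr /= lerDl subr_ge0 fy_ge.
apply: le_trans H1 _.
rewrite big_ord_recl.
under eq_bigr do rewrite lift0.
rewrite /C0; lra.
Qed.

End Main.

Lemma jensen {R : realType} {p : nat} (F : 'rV[R]_p -> R) : convex_fun F ->
  forall T (u : nat -> 'rV[R]_p), (0 < T)%N ->
  F (T%:R^-1 *: \sum_(k < T) u k) <= T%:R^-1 * \sum_(k < T) F (u k).
Proof.
move=> Hc; elim=> // T IH u _.
case: T IH => [|T] IH.
  by rewrite !big_ord1 invr1 scale1r mul1r.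
have IH' := IH u isT.
set a : R := T.+1%:R / T.+2%:R.
have Tn : (T.+1%:R : R) != 0 by rewrite pnatr_eq0.
have Tn2 : (T.+2%:R : R) != 0 by rewrite pnatr_eq0.
have Tp : (0 : R) < T.+1%:R by rewrite ltr0n.
have Tp2 : (0 : R) < T.+2%:R by rewrite ltr0n.
have ha1 : a * T.+1%:R^-1 = T.+2%:R^-1 by rewrite /a mulrAC mulfV // mul1r.
have ha2 : 1 - a = T.+2%:R^-1.
  by rewrite /a -{1}(divff Tn2) -mulrBl -natrB ?leqnSn // subSnn mul1r.
have a0 : 0 <= a by rewrite /a divr_ge0 // ltW.
have a1 : a <= 1 by rewrite /a ler_pdivrMr // mul1r ler_nat.
have E : T.+2%:R^-1 *: \sum_(k < T.+2) u k = a *: (T.+1%:R^-1 *: \sum_(k < T.+1) u k) + (1 - a) *: u T.+1.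
  by rewrite [in LHS]big_ord_recr /= scalerDr scalerA ha1 ha2.
rewrite E.
apply: le_trans (Hc a _ _ _) _; first by rewrite a0 a1.
rewrite [in X in _ <= X]big_ord_recr /=.
have -> : T.+2%:R^-1 * (\sum_(i < T.+1) F (u i) + F (u T.+1)) =
   a * (T.+1%:R^-1 * \sum_(i < T.+1) F (u i)) + (1 - a) * F (u T.+1).
  by rewrite ha2 mulrA ha1 mulrDr.
apply: lerD => //; by apply: ler_wpM2l.
Qed.

Unset Implicit Arguments.
Set Strict Implicit.

Theorem theorem2p4 (R : realType) (n p : nat) (W : 'M[R]_n)
  (fi : 'I_n -> 'rV[R]_p -> R) (g : 'I_n -> 'rV[R]_p -> 'rV[R]_p)
  (Li : 'I_n -> R) (mu : R) (t : nat -> nat) (x : nat -> 'I_n -> 'rV[R]_p) :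
  doubly_stochastic W ->
  strongly_connected W ->
  (forall i, 0 < W i i) ->
  (forall i, is_gradient (fi i) (g i)) ->
  convex_fun (fun z => n%:R^-1 * \sum_(i < n) fi i z) ->
  (exists xs : 'rV[R]_p, forall y, n%:R^-1 * \sum_(i < n) fi i xs <= n%:R^-1 * \sum_(i < n) fi i y) ->
  (forall i, 0 < Li i) ->
  (forall i, smooth_grad (g i) (Li i)) ->
  0 < mu -> mu <= (\big[Num.max/0]_(i < n) Li i)^-1 ->
  (forall k, (1 <= t k)%N) ->
  cvgn (series (fun k => specnorm (W - n%:R^-1 *: const_mx 1) ^+ t k)) ->
  near_dgd_plus W t mu g x ->
  let f := fun z => n%:R^-1 * \sum_(i < n) fi i z in
  let xbar := fun k => n%:R^-1 *: \sum_(i < n) x k i in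
  exists fstar : R,
    (exists xs, f xs = fstar /\ forall y, fstar <= f y) /\
    exists C : R, 0 < C /\
      forall T : nat, (0 < T)%N ->
        T%:R * (f (T%:R^-1 *: \sum_(k < T) xbar k) - fstar) <= C.
Proof.
move=> HW _ _ Hg Hconv [xs Hmin] HLi Hsm mu0 muL Ht Hser Hdgd f xbar.
exists (f xs); split; first by exists xs; split => // y; exact: Hmin.
have [n0|n0] := posnP n.
  subst n; exists 1; split => // T _.
  by rewrite /f !big_ord0 !mulr0 subrr mulr0.
set C0' := C0 W fi g Li mu t x xs.
exists (1 + `|C0'|); split; first by rewrite ltr_pwDl.
move=> T T0.
have HF := Fsum n0 HW Hg Hconv Hmin HLi Hsm mu0 muL Ht Hser Hdgd T.
have HJ := jensen Hconv xbar T0.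
have Tp : (0 : R) < T%:R by rewrite ltr0n.
have E : T%:R * (T%:R^-1 * \sum_(k < T) f (xbar k) - f xs) = \sum_(k < T) (f (xbar k) - f xs).
  rewrite mulrBr mulrA mulfV ?gt_eqF // mul1r sumrB sumr_const card_ord mulr_natl //.
apply: le_trans (_ : T%:R * (T%:R^-1 * \sum_(k < T) f (xbar k) - f xs) <= _).
  by apply: ler_wpM2l; [exact: ltW | rewrite lerD2r].
rewrite E.
apply: le_trans HF _.
apply: le_trans (ler_norm _) _; rewrite lerDr //.
Qed.
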